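(* Let $\alpha\in\mathcal{O}_K$ be such that $\alpha^2$ is (additively) indecomposable. Then there is $j\geq-1$ such that $\alpha\in\{\pm\alpha_j,\pm\alpha_j'\}$.
   Context: $D>1$ squarefree, $K=\mathbb{Q}(\sqrt D)$, $\mathcal{O}_K$ its ring of integers, $\alpha'$ the conjugate. A totally positive $\beta\in\mathcal{O}_K$ (i.e. $\beta>0,\beta'>0$) is indecomposable if it cannot be written as $\beta=\gamma+\delta$ with $\gamma,\delta\in\mathcal{O}_K$ totally positive. $\omega_D=\sqrt D$ if $D\equiv2,3\pmod4$, $\omega_D=\frac{1+\sqrt D}2$ if $D\equiv1\pmod4$, with continued fraction $[u_0;u_1,u_2,\dots]$; $p_{-1}=1,q_{-1}=0,p_0=u_0,q_0=1$, $p_{i+1}=u_{i+1}p_i+p_{i-1}$, $q_{i+1}=u_{i+1}q_i+q_{i-1}$, and $\alpha_j=p_j-q_j\omega_D'$. *)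

(* Defs.v *)
From Stdlib Require Import Reals ZArith.
Open Scope R_scope.

Definition squarefree (D : Z) : Prop :=
  forall k : Z, (k * k | D)%Z -> k = 1%Z \/ k = (-1)%Z.

Definition is1mod4 (D : Z) : bool := Z.eqb (Z.modulo D 4) 1.

Definition omega (D : Z) : R :=
  if is1mod4 D then (1 + sqrt (IZR D)) / 2 else sqrt (IZR D).
Definition omega' (D : Z) : R :=
  if is1mod4 D then (1 - sqrt (IZR D)) / 2 else - sqrt (IZR D).

(* O_K = Z[omega_D]; an element a + b*omega_D is represented by (a, b). *)
Definition OK := (Z * Z)%type.

Definition emb (D : Z) (x : OK) : R := IZR (fst x) + IZR (snd x) * omega D.
Definition emb' (D : Z) (x : OK) : R := IZR (fst x) + IZR (snd x) * omega' D.

Definition addOK (x y : OK) : OK := (fst x + fst y, snd x + snd y)%Z.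
Definition oppOK (x : OK) : OK := (- fst x, - snd x)%Z.

(* omega^2 = t*omega + n with (t,n) = (1,(D-1)/4) if D = 1 mod 4, else (0,D). *)
Definition omega_t (D : Z) : Z := if is1mod4 D then 1%Z else 0%Z.
Definition omega_n (D : Z) : Z := if is1mod4 D then ((D - 1) / 4)%Z else D.

Definition mulOK (D : Z) (x y : OK) : OK :=
  let (a, b) := x in let (c, d) := y in
  (a * c + b * d * omega_n D, a * d + b * c + b * d * omega_t D)%Z.

(* Galois conjugation on coordinates: omega' = 1 - omega (D = 1 mod 4),
   omega' = - omega otherwise. *)
Definition conjOK (D : Z) (x : OK) : OK :=
  if is1mod4 D then (fst x + snd x, - snd x)%Z else (fst x, - snd x)%Z.

Definition totally_positive (D : Z) (b : OK) : Prop :=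
  0 < emb D b /\ 0 < emb' D b.

Definition indecomposable (D : Z) (b : OK) : Prop :=
  totally_positive D b /\
  ~ (exists g d : OK, totally_positive D g /\ totally_positive D d /\
                      b = addOK g d).

Fixpoint cf_x (D : Z) (i : nat) : R :=
  match i with
  | O => omega D
  | S i' => / (cf_x D i' - IZR (Int_part (cf_x D i')))
  end.
Definition cf_u (D : Z) (i : nat) : Z := Int_part (cf_x D i).

(* Convergents with shifted index: pP D n = p_{n-1}, qQ D n = q_{n-1},
   so pP D 0 = p_{-1} = 1, qQ D 0 = q_{-1} = 0, pP D 1 = p_0 = u_0, qQ D 1 = 1. *)
Fixpoint pq (D : Z) (n : nat) : Z * Z * (Z * Z) :=
  (* returns ((p_{n-1}, q_{n-1}), (p_n, q_n)) *)
  match n with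
  | O => ((1%Z, 0%Z), (cf_u D 0, 1%Z))
  | S n' =>
      let '((_, _), (p, q)) := pq D n' in
      let '((pm, qm), _) := pq D n' in
      ((p, q), (cf_u D n * p + pm, cf_u D n * q + qm)%Z)
  end.
Definition pP (D : Z) (n : nat) : Z := fst (fst (pq D n)).
Definition qQ (D : Z) (n : nat) : Z := snd (fst (pq D n)).

(* alpha_j = p_j - q_j * omega_D' as an element of O_K, with j = n - 1 >= -1. *)
Definition alphaJ (D : Z) (n : nat) : OK :=
  addOK (pP D n, 0%Z) (mulOK D ((- qQ D n)%Z, 0%Z) (conjOK D (0%Z, 1%Z))).

(* Main.v *)
Require Import Defs.
From Stdlib Require Import Reals ZArith Lia Lra Psatz.
Open Scope R_scope.

Lemma sf_nosq (D : Z) : (1 < D)%Z -> squarefree D ->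
  forall r s : Z, s <> 0%Z -> (D * (s * s) = r * r)%Z -> False.
Proof.
  intros HD Hsf r s Hs E.
  set (g := Z.gcd r s).
  assert (Hg : g <> 0%Z) by (unfold g; rewrite Z.gcd_eq_0; lia).
  destruct (Z.gcd_divide_l r s) as [r1 Hr].
  destruct (Z.gcd_divide_r r s) as [s1 Hs1].
  fold g in Hr, Hs1.
  assert (Hc : Z.gcd r1 s1 = 1%Z).
  { pose proof (Z.gcd_div_gcd r s g Hg eq_refl) as H.
    rewrite Hr, Hs1, !Z.div_mul in H by exact Hg. exact H. }
  assert (E1 : (D * (s1 * s1) = r1 * r1)%Z).
  { apply (Z.mul_reg_r _ _ (g*g)); [nia|]. rewrite Hr, Hs1 in E. nia. }
  assert (Hd : (s1 | r1 * r1)%Z) by (exists (D * s1)%Z; lia).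
  apply Z.gauss in Hd; [| rewrite Z.gcd_comm; exact Hc].
  assert (Hd1 : (s1 | 1)%Z).
  { rewrite <- Hc. apply Z.gcd_greatest; [exact Hd| apply Z.divide_refl]. }
  apply Z.divide_1_r in Hd1.
  assert (ED : D = (r1 * r1)%Z) by (destruct Hd1 as [-> | ->]; nia).
  destruct (Hsf r1) as [H1|H1]; [rewrite ED; apply Z.divide_refl| |]; subst r1; lia.
Qed.

Lemma sqrtD_facts (D : Z) : (1 < D)%Z -> 1 < sqrt (IZR D) /\ sqrt (IZR D) * sqrt (IZR D) = IZR D.
Proof.
  intros HD. assert (H1 : 1 < IZR D) by (apply IZR_lt; lia).
  split.
  - rewrite <- sqrt_1. apply sqrt_lt_1_alt. lra.
  - apply sqrt_sqrt. lra.
Qed.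

Lemma irr (D : Z) : (1 < D)%Z -> squarefree D ->
  forall p q : Z, q <> 0%Z -> IZR q * omega D <> IZR p.
Proof.
  intros HD Hsf p q Hq E.
  destruct (sqrtD_facts D HD) as [H1 H2].
  assert (Hq' : IZR q <> 0) by (apply not_0_IZR; exact Hq).
  unfold omega in E. destruct (is1mod4 D).
  - apply (sf_nosq D HD Hsf (2*p - q) q Hq).
    apply eq_IZR. rewrite !mult_IZR, minus_IZR, mult_IZR.
    assert (Es : IZR q * sqrt (IZR D) = 2 * IZR p - IZR q) by lra.
    rewrite <- Es. rewrite <- H2 at 1. ring.
  - apply (sf_nosq D HD Hsf p q Hq).
    apply eq_IZR. rewrite !mult_IZR. rewrite <- E. rewrite <- H2 at 1. ring.
Qed.

Lemma omega_facts (D : Z) : (1 < D)%Z ->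
  omega' D = IZR (omega_t D) - omega D /\
  omega D * omega D = IZR (omega_n D) + IZR (omega_t D) * omega D /\
  omega' D * omega' D = IZR (omega_n D) + IZR (omega_t D) * omega' D /\
  1 < omega D /\ omega' D < 0.
Proof.
  intros HD.
  assert (H1 : 1 < sqrt (IZR D)).
  { assert (1 < IZR D) by (apply IZR_lt; lia). rewrite <- sqrt_1. apply sqrt_lt_1_alt. lra. }
  assert (H2 : sqrt (IZR D) * sqrt (IZR D) = IZR D) by (apply sqrt_sqrt; apply IZR_le; lia).
  unfold omega, omega', omega_t, omega_n. destruct (is1mod4 D) eqn:E.
  - unfold is1mod4 in E. apply Z.eqb_eq in E.
    assert (Ek : (D - 1 = 4 * (D/4))%Z) by (pose proof (Z_div_mod_eq_full D 4); lia).
    assert (En : IZR ((D-1)/4) * 4 = IZR D - 1).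
    { assert (Eq : ((D-1)/4 = D/4)%Z).
      { rewrite Ek. rewrite Z.mul_comm, Z.div_mul by lia. reflexivity. }
      rewrite Eq. replace D with (D - 1 + 1)%Z at 2 by ring.
      rewrite Ek, plus_IZR, mult_IZR. ring. }
    repeat split; nra.
  - repeat split; nra.
Qed.

Lemma emb_mul (D : Z) (HD : (1 < D)%Z) (x y : OK) :
  emb D (mulOK D x y) = emb D x * emb D y /\ emb' D (mulOK D x y) = emb' D x * emb' D y.
Proof.
  destruct (omega_facts D HD) as [_ [A [B _]]].
  destruct x as [a b], y as [c d]. unfold emb, emb', mulOK; simpl.
  rewrite !plus_IZR, !mult_IZR. split; nra.
Qed.

Lemma emb_add (D : Z) (x y : OK) :
  emb D (addOK x y) = emb D x + emb D y /\ emb' D (addOK x y) = emb' D x + emb' D y.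
Proof. destruct x, y; unfold emb, emb', addOK; simpl; rewrite !plus_IZR; split; ring. Qed.

Lemma emb_opp (D : Z) (x : OK) :
  emb D (oppOK x) = - emb D x /\ emb' D (oppOK x) = - emb' D x.
Proof. destruct x; unfold emb, emb', oppOK; simpl; rewrite !opp_IZR; split; ring. Qed.

Lemma emb_conj (D : Z) (HD : (1 < D)%Z) (x : OK) :
  emb D (conjOK D x) = emb' D x /\ emb' D (conjOK D x) = emb D x.
Proof.
  destruct (omega_facts D HD) as [A _].
  destruct x as [a b]. unfold emb, emb', conjOK in *. unfold omega_t in A.
  destruct (is1mod4 D); simpl; rewrite ?plus_IZR, ?opp_IZR; split; nra.
Qed.

Definition dl (D : Z) (n : nat) : R := IZR (qQ D n) * omega D - IZR (pP D n).

Lemma pP_0 D : pP D 0 = 1%Z. Proof. reflexivity. Qed.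
Lemma qQ_0 D : qQ D 0 = 0%Z. Proof. reflexivity. Qed.
Lemma pP_1 D : pP D 1 = cf_u D 0. Proof. reflexivity. Qed.
Lemma qQ_1 D : qQ D 1 = 1%Z. Proof. reflexivity. Qed.
Lemma pq_S D n : pq D (S n) = (snd (pq D n),
   (cf_u D (S n) * fst (snd (pq D n)) + fst (fst (pq D n)),
    cf_u D (S n) * snd (snd (pq D n)) + snd (fst (pq D n)))%Z).
Proof. simpl. destruct (pq D n) as [[a b] [c d]]. reflexivity. Qed.
Lemma pP_SS D n : pP D (S (S n)) = (cf_u D (S n) * pP D (S n) + pP D n)%Z.
Proof. unfold pP. rewrite (pq_S D (S n)). cbn [fst snd]. rewrite (pq_S D n). reflexivity. Qed.
Lemma qQ_SS D n : qQ D (S (S n)) = (cf_u D (S n) * qQ D (S n) + qQ D n)%Z.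
Proof. unfold qQ. rewrite (pq_S D (S n)). cbn [fst snd]. rewrite (pq_S D n). reflexivity. Qed.

Lemma cf_x_S D n : cf_x D (S n) = / (cf_x D n - IZR (cf_u D n)).
Proof. reflexivity. Qed.

Lemma int_ge1 (x : R) : 1 < x -> (1 <= Int_part x)%Z.
Proof.
  intros H. destruct (base_Int_part x) as [_ H2].
  assert (0 < IZR (Int_part x)) by lra. apply lt_IZR in H0. lia.
Qed.

Section CF.
Variable D : Z.
Hypothesis HD : (1 < D)%Z.
Hypothesis Hsf : squarefree D.

Definition G (n : nat) : Prop :=
  1 < cf_x D (S n) /\ dl D n = - cf_x D (S n) * dl D (S n) /\
  (1 <= qQ D (S n))%Z /\ (0 <= qQ D n)%Z.

Lemma step_x (x : R) (u : Z) : u = Int_part x -> x - IZR u <> 0 ->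
  1 < / (x - IZR u) /\ / (x - IZR u) * (x - IZR u) = 1.
Proof.
  intros -> Hne. destruct (base_Int_part x) as [H1 H2].
  assert (0 < x - IZR (Int_part x) < 1) by lra.
  split.
  - rewrite <- Rinv_1. apply Rinv_lt_contravar; lra.
  - field. exact Hne.
Qed.

Lemma G_all : forall n, G n.
Proof.
  destruct (omega_facts D HD) as [_ [_ [_ [Hw _]]]].
  induction n as [|n IH].
  - unfold G, dl. rewrite qQ_1, qQ_0, pP_0, pP_1.
    assert (Hne : cf_x D 0 - IZR (cf_u D 0) <> 0).
    { intro E. apply (irr D HD Hsf (cf_u D 0) 1); [lia|]. simpl in E |- *. lra. }
    destruct (step_x (cf_x D 0) (cf_u D 0) eq_refl Hne) as [A B].
    rewrite cf_x_S. simpl cf_x in *. split; [exact A|]. split; [|lia].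
    replace (1 * omega D - IZR (cf_u D 0)) with (omega D - IZR (cf_u D 0)) by ring.
    nra.
  - destruct IH as [Hx [Hd [Hq1 Hq0]]].
    assert (Hu : (1 <= cf_u D (S n))%Z) by (apply int_ge1; exact Hx).
    assert (HQ : (1 <= qQ D (S (S n)))%Z) by (rewrite qQ_SS; nia).
    assert (Edl : dl D (S (S n)) = - (cf_x D (S n) - IZR (cf_u D (S n))) * dl D (S n)).
    { unfold dl at 1. rewrite qQ_SS, pP_SS, !plus_IZR, !mult_IZR.
      unfold dl in Hd. unfold dl. nra. }
    assert (Hnz : dl D (S (S n)) <> 0).
    { unfold dl. intro E. apply (irr D HD Hsf (pP D (S (S n))) (qQ D (S (S n)))); [lia|lra]. }
    assert (Hne : cf_x D (S n) - IZR (cf_u D (S n)) <> 0).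
    { intro E. rewrite E in Edl. apply Hnz. rewrite Edl. ring. }
    destruct (step_x (cf_x D (S n)) (cf_u D (S n)) eq_refl Hne) as [A B].
    unfold G. rewrite cf_x_S. split; [exact A|]. split; [|lia].
    rewrite Edl.
    transitivity ((/ (cf_x D (S n) - IZR (cf_u D (S n))) * (cf_x D (S n) - IZR (cf_u D (S n)))) * dl D (S n)).
    + rewrite B. ring.
    + ring.
Qed.

Lemma u_pos : forall n, (1 <= cf_u D n)%Z.
Proof.
  destruct (omega_facts D HD) as [_ [_ [_ [Hw _]]]].
  intros [|n]. - apply int_ge1. exact Hw.
  - apply int_ge1. apply (G_all n).
Qed.

Lemma Q_pos n : (1 <= qQ D (S n))%Z. Proof. apply (G_all n). Qed.
Lemma Q_nonneg n : (0 <= qQ D n)%Z. Proof. apply (G_all n). Qed.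

Lemma P_pos : forall n, (1 <= pP D n)%Z.
Proof.
  assert (forall n, (1 <= pP D n)%Z /\ (1 <= pP D (S n))%Z).
  { induction n as [|n [IH1 IH2]].
    - rewrite pP_0, pP_1. pose proof (u_pos 0). lia.
    - split; [exact IH2|]. rewrite pP_SS. pose proof (u_pos (S n)). nia. }
  intro n; apply H.
Qed.

Lemma P_step n : (pP D (S n) + pP D n <= pP D (S (S n)))%Z.
Proof. rewrite pP_SS. pose proof (u_pos (S n)). pose proof (P_pos (S n)). nia. Qed.

Lemma Q_mono : forall n, (qQ D n <= qQ D (S n))%Z.
Proof.
  intros [|n]. - rewrite qQ_0, qQ_1. lia.
  - rewrite qQ_SS. pose proof (u_pos (S n)). pose proof (Q_pos n). pose proof (Q_nonneg n). nia.
Qed.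

Lemma Q_unb : forall n, (Z.of_nat n <= qQ D (S n))%Z.
Proof.
  assert (forall n, (Z.of_nat n <= qQ D (S n))%Z /\ (Z.of_nat (S n) <= qQ D (S (S n)))%Z).
  { induction n as [|n [IH1 IH2]].
    - rewrite qQ_SS, qQ_1, qQ_0. pose proof (u_pos 1). simpl. lia.
    - split; [exact IH2|]. rewrite qQ_SS. pose proof (u_pos (S (S n))).
      pose proof (Q_pos n). pose proof (Q_pos (S n)). nia. }
  intro n; apply H.
Qed.

Definition sdet (n : nat) : Z := (pP D (S n) * qQ D n - pP D n * qQ D (S n))%Z.

Lemma sdet_pm : forall n, sdet n = 1%Z \/ sdet n = (-1)%Z.
Proof.
  assert (forall n, sdet n = (-1)%Z \/ sdet n = 1%Z).
  { induction n as [|n IH].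
    - unfold sdet. rewrite qQ_0, qQ_1, pP_0. lia.
    - assert (sdet (S n) = - sdet n)%Z.
      { unfold sdet. rewrite pP_SS, qQ_SS. ring. }
      lia. }
  intro n; destruct (H n); auto.
Qed.

Lemma dl_nz n : dl D (S n) <> 0.
Proof.
  unfold dl. intro E. pose proof (Q_pos n).
  apply (irr D HD Hsf (pP D (S n)) (qQ D (S n))); [lia|lra].
Qed.

Lemma dl_alt n : dl D n * dl D (S n) < 0 /\ Rabs (dl D (S n)) < Rabs (dl D n).
Proof.
  destruct (G_all n) as [Hx [Hd _]]. pose proof (dl_nz n) as Hz.
  rewrite Hd. split.
  - assert (0 < dl D (S n) * dl D (S n)).
    { destruct (Rlt_or_le 0 (dl D (S n))); nra. }
    nra.
  - rewrite Rabs_mult, Rabs_Ropp, (Rabs_right (cf_x D (S n))) by lra.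
    assert (0 < Rabs (dl D (S n))) by (apply Rabs_pos_lt; exact Hz). nra.
Qed.

Lemma dl1_pos : 0 < dl D 1.
Proof.
  pose proof (dl_nz 0) as Hz. unfold dl in *. rewrite qQ_1, pP_1 in *.
  destruct (base_Int_part (cf_x D 0)) as [H1 _]. unfold cf_u in *. simpl cf_x in *. lra.
Qed.

Lemma F4 n : IZR (qQ D (S n)) * Rabs (dl D n) + IZR (qQ D n) * Rabs (dl D (S n)) = 1.
Proof.
  assert (E : dl D n * IZR (qQ D (S n)) - dl D (S n) * IZR (qQ D n) = IZR (sdet n)).
  { unfold dl, sdet. rewrite minus_IZR, !mult_IZR. ring. }
  destruct (dl_alt n) as [Hs _].
  pose proof (Q_pos n) as Q1. pose proof (Q_nonneg n) as Q0.
  apply IZR_le in Q1. apply IZR_le in Q0.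
  destruct (sdet_pm n) as [S1|S1]; rewrite S1 in E;
  (destruct (Rlt_or_le 0 (dl D n)) as [Hp|Hp];
   [assert (dl D (S n) < 0) by nra; rewrite (Rabs_right (dl D n)) by lra;
      rewrite (Rabs_left (dl D (S n))) by lra
   |assert (dl D n <> 0) by (intro Z0; rewrite Z0 in Hs; lra);
    assert (0 < dl D (S n)) by nra; rewrite (Rabs_left (dl D n)) by lra;
      rewrite (Rabs_right (dl D (S n))) by lra]); nra.
Qed.

End CF.

Section Key.
Variable D : Z.
Hypothesis HD : (1 < D)%Z.
Hypothesis Hsf : squarefree D.

Lemma find_K q : (1 <= q)%Z -> exists K, (1 <= K)%nat /\ (qQ D K <= q < qQ D (S K))%Z.
Proof.
  intros Hq.
  assert (H : forall n, (exists K, (1 <= K)%nat /\ (qQ D K <= q < qQ D (S K))%Z) \/ (qQ D (S n) <= q)%Z).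
  { induction n as [|n [IH|IH]].
    - right. rewrite qQ_1. exact Hq.
    - left. exact IH.
    - destruct (Z_lt_le_dec q (qQ D (S (S n)))).
      + left. exists (S n). split; [lia|lia].
      + right. exact l. }
  destruct (H (S (Z.to_nat q))) as [H1|H1]; [exact H1|].
  pose proof (Q_unb D HD Hsf (S (Z.to_nat q))). lia.
Qed.

Lemma neq_of_lt p q k : Rabs (dl D k) < Rabs (IZR q * omega D - IZR p) ->
  (pP D k <> p \/ qQ D k <> q).
Proof.
  intros H. destruct (Z.eq_dec (pP D k) p) as [E1|E1]; [|left; exact E1].
  destruct (Z.eq_dec (qQ D k) q) as [E2|E2]; [|right; exact E2].
  unfold dl in H. rewrite E1, E2 in H. lra.
Qed.

Lemma key p q : (1 <= q)%Z -> Rabs (IZR q * omega D - IZR p) <= 1 ->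
  (exists k, p = pP D k /\ q = qQ D k) \/
  (exists k, (1 <= k)%nat /\ (pP D k <= p)%Z /\ (qQ D k <= q)%Z /\
     Rabs (dl D k) < Rabs (IZR q * omega D - IZR p)).
Proof.
  intros Hq Hd.
  destruct (omega_facts D HD) as [_ [_ [_ [Hw _]]]].
  destruct (find_K q Hq) as [K [HK [HqK1 HqK2]]].
  set (s := sdet D K).
  assert (Hs : (s * s = 1)%Z) by (destruct (sdet_pm D K); unfold s; lia).
  assert (Hxy : exists x y, p = (x * pP D K + y * pP D (S K))%Z /\ q = (x * qQ D K + y * qQ D (S K))%Z).
  { exists ((p * qQ D (S K) - pP D (S K) * q) * (- s))%Z, ((pP D K * q - p * qQ D K) * (- s))%Z.
    split.
    - transitivity (s * s * p)%Z; [rewrite Hs; ring|]. unfold s, sdet. ring.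
    - transitivity (s * s * q)%Z; [rewrite Hs; ring|]. unfold s, sdet. ring. }
  destruct Hxy as [x [y [Hp Hq']]].
  set (a := dl D K). set (b := dl D (S K)).
  assert (Ed : IZR q * omega D - IZR p = IZR x * a + IZR y * b).
  { unfold a, b, dl. rewrite Hp, Hq'. rewrite !plus_IZR, !mult_IZR. ring. }
  destruct (dl_alt D HD Hsf K) as [Hab Hab2]. fold a b in Hab, Hab2.
  assert (QK1 : (1 <= qQ D K)%Z) by (destruct K; [lia|apply Q_pos; auto]).
  assert (PK1 : (1 <= pP D K)%Z) by (apply P_pos; auto).
  assert (Hpk : forall k, (1 <= k)%nat -> (pP D k <= p)%Z -> (qQ D k <= q)%Z ->
     Rabs (dl D k) < Rabs (IZR q * omega D - IZR p) -> 
     (exists k, p = pP D k /\ q = qQ D k) \/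
     (exists k, (1 <= k)%nat /\ (pP D k <= p)%Z /\ (qQ D k <= q)%Z /\
       Rabs (dl D k) < Rabs (IZR q * omega D - IZR p))).
  { intros k H1 H2 H3 H4. right. exists k. auto. }
  assert (Ediff : IZR (p - pP D K) = IZR (q - qQ D K) * omega D - (IZR q * omega D - IZR p) + a).
  { unfold a, dl. rewrite !minus_IZR. ring. }
  assert (Hqw : 0 <= IZR (q - qQ D K) * omega D).
  { apply Rmult_le_pos; [apply IZR_le; lia| lra]. }
  destruct (Z.eq_dec y 0) as [Hy0|Hy0].
  - subst y. assert (Hx1 : (1 <= x)%Z) by nia.
    destruct (Z.eq_dec x 1) as [Hx|Hx].
    + left. exists K. subst x. split; lia.
    + apply (Hpk K); [exact HK|nia|lia|].
      rewrite Ed. rewrite Rmult_0_l, Rplus_0_r, Rabs_mult.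
      rewrite (Rabs_right (IZR x)) by (apply Rle_ge, IZR_le; lia).
      assert (2 <= IZR x) by (apply IZR_le; lia).
      assert (a <> 0) by (intro Z0; rewrite Z0 in Hab; lra).
      assert (0 < Rabs a) by (apply Rabs_pos_lt; auto). fold a. nra.
  - assert (Hxy : ((1 <= x /\ y <= -1) \/ (x <= -1 /\ 1 <= y))%Z).
    { assert (QS : (qQ D K <= qQ D (S K))%Z) by (apply Q_mono; auto).
      destruct (Z_le_gt_dec 1 y); destruct (Z_le_gt_dec x 0).
      - right; split; [|lia]. destruct (Z.eq_dec x 0); [subst; nia|lia].
      - exfalso. assert (x * qQ D K >= qQ D K)%Z by nia. assert (y * qQ D (S K) >= qQ D (S K))%Z by nia. lia.
      - exfalso. assert (y <= -1)%Z by lia. assert (x * qQ D K <= 0)%Z by nia. assert (y * qQ D (S K) <= - qQ D (S K))%Z by nia. lia.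
      - left. lia. }
    destruct Hxy as [[Hx Hy]|[Hx Hy]].
    + apply IZR_le in Hx. apply IZR_le in Hy.
      assert (Hlt : Rabs a < Rabs (IZR q * omega D - IZR p) /\
                    IZR q * omega D - IZR p - a < 1 ).
      { rewrite Ed. destruct (Rlt_or_le 0 a) as [Ha|Ha].
        - assert (b < 0) by nra.
          assert ((IZR x - 1) * a >= 0) by nra. assert (IZR y * b > 0) by nra.
          rewrite Ed in Hd.
          rewrite (Rabs_right a), Rabs_right in * by lra. lra.
        - assert (a <> 0) by (intro Z0; rewrite Z0 in Hab; lra).
          assert (0 < b) by nra.
          assert ((IZR x - 1) * a <= 0) by nra. assert (IZR y * b < 0) by nra.
          rewrite Ed in Hd.
          rewrite (Rabs_left a), Rabs_left in * by lra. lra. }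
      apply (Hpk K); [exact HK| |lia|apply Hlt].
      assert (Hm1 : -1 < IZR (p - pP D K)) by lra.
      apply lt_IZR in Hm1. lia.
    + apply IZR_le in Hx. apply IZR_le in Hy.
      destruct (Rlt_or_le 0 a) as [Ha|Ha].
      * assert (b < 0) by nra.
        assert (IZR x * a <= - a) by nra. assert (IZR y * b <= b) by nra.
        assert (Hlt : Rabs a < Rabs (IZR q * omega D - IZR p)).
        { rewrite Ed. rewrite Rabs_right, Rabs_left by lra. lra. }
        apply (Hpk K); [exact HK| |lia|exact Hlt].
        assert (Hm1 : -1 < IZR (p - pP D K)) by lra.
        apply lt_IZR in Hm1. lia.
      * assert (Han : a <> 0) by (intro Z0; rewrite Z0 in Hab; lra).
        assert (0 < b) by nra.
        assert (IZR x * a >= - a) by nra. assert (IZR y * b >= b) by nra.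
        assert (Hlt : Rabs a < Rabs (IZR q * omega D - IZR p)).
        { rewrite Ed. rewrite Rabs_left, Rabs_right by lra. lra. }
        assert (Hdpos : 0 < IZR q * omega D - IZR p) by lra.
        rewrite (Rabs_right (IZR q * omega D - IZR p)) in Hd by lra.
        destruct (Z.eq_dec q (qQ D K)) as [EqK|NeK].
        --
           assert (Ep : p = (pP D K - 1)%Z).
           { assert (E0 : IZR (q - qQ D K) = 0) by (rewrite EqK, Z.sub_diag; reflexivity).
             rewrite E0, Rmult_0_l in Ediff. rewrite Rabs_left in Hlt by lra.
             assert (Hr : -2 < IZR (p - pP D K) < 0) by lra.
             destruct Hr as [Hr1 Hr2]. apply lt_IZR in Hr1. apply lt_IZR in Hr2. lia. }
           assert (Edl : IZR q * omega D - IZR p = a + 1).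
           { unfold a, dl. rewrite Ep, EqK, minus_IZR. ring. }
           destruct K as [|[|m]]; [lia| |].
           { exfalso. assert (Hd1 : 0 < a) by exact (dl1_pos D HD Hsf). lra. }
           pose proof (F4 D HD Hsf (S m)) as HF. fold a in HF.
           pose proof (Q_pos D HD Hsf m) as Qm1.
           pose proof (Q_nonneg D HD Hsf m) as Qm0.
           pose proof (P_step D HD Hsf m) as Pst.
           pose proof (P_pos D HD Hsf m) as Pm.
           pose proof (u_pos D HD Hsf (S m)) as Um.
           pose proof (qQ_SS D m) as QSS.
           pose proof (dl_nz D HD Hsf m) as Hz.
           assert (0 < Rabs (dl D (S m))) by (apply Rabs_pos_lt; auto).
           rewrite (Rabs_left a) in HF by lra.
           destruct (Z.eq_dec (qQ D (S (S m))) 1) as [E1|E1];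
             [destruct (Z.eq_dec (qQ D (S m)) 1) as [E2|E2]|].
           ++
              assert (Hm : qQ D m = 0%Z) by nia.
              destruct m as [|m'].
              ** left. exists 1%nat. rewrite Ep, EqK, E1, qQ_1.
                 rewrite pP_SS, pP_0. assert (Hu1 : cf_u D 1 = 1%Z) by (rewrite qQ_SS, qQ_1, qQ_0 in E1; lia).
                 rewrite Hu1. split; ring.
              ** pose proof (Q_pos D HD Hsf m'). lia.
           ++ apply (Hpk (S m)); [lia|lia|rewrite EqK; apply Q_mono; auto|].
              rewrite Edl, (Rabs_right (a + 1)) by lra.
              assert (2 <= IZR (qQ D (S m))) by (apply IZR_le; lia).
              assert (1 <= IZR (qQ D (S (S m)))) by (apply IZR_le; lia). nra.
           ++ apply (Hpk (S m)); [lia|lia|rewrite EqK; apply Q_mono; auto|].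
              rewrite Edl, (Rabs_right (a + 1)) by lra.
              assert (1 <= IZR (qQ D (S m))) by (apply IZR_le; lia).
              assert (2 <= IZR (qQ D (S (S m)))) by (apply IZR_le; lia). nra.
        -- assert (Hq2 : 1 <= IZR (q - qQ D K)) by (apply IZR_le; lia).
           assert (omega D <= IZR (q - qQ D K) * omega D) by nra.
           apply (Hpk K); [exact HK| |lia|exact Hlt].
           assert (Hm1 : -1 < IZR (p - pP D K)) by (rewrite Rabs_left in Hlt; lra).
           apply lt_IZR in Hm1. lia.
Qed.

End Key.

Definition BM (D : Z) (e e' : R) : Prop := forall mu : OK,
  emb D mu <> 0 -> emb' D mu <> 0 -> Rabs (emb D mu) < e -> Rabs (emb' D mu) < e' -> False.

Lemma sq_abs (x : R) : x * x = Rabs x * Rabs x.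
Proof. destruct (Rcase_abs x); [rewrite Rabs_left by lra|rewrite Rabs_right by lra]; ring. Qed.

Lemma OK_eq (X g : OK) : X = addOK g (addOK X (oppOK g)).
Proof. destruct X, g; unfold addOK, oppOK; simpl; f_equal; ring. Qed.

Lemma box (D : Z) (HD : (1 < D)%Z) (alpha : OK) :
  indecomposable D (mulOK D alpha alpha) -> BM D (Rabs (emb D alpha)) (Rabs (emb' D alpha)).
Proof.
  intros [Htp Hnd] mu H1 H2 H3 H4. apply Hnd.
  destruct (emb_mul D HD mu mu) as [M1 M2].
  destruct (emb_mul D HD alpha alpha) as [A1 A2].
  exists (mulOK D mu mu), (addOK (mulOK D alpha alpha) (oppOK (mulOK D mu mu))).
  split; [|split; [|apply OK_eq]].
  - unfold totally_positive. rewrite M1, M2.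
    pose proof (Rabs_pos_lt _ H1). pose proof (Rabs_pos_lt _ H2).
    rewrite !(sq_abs (emb D mu)), !(sq_abs (emb' D mu)). split; nra.
  - unfold totally_positive.
    destruct (emb_add D (mulOK D alpha alpha) (oppOK (mulOK D mu mu))) as [E1 E2].
    destruct (emb_opp D (mulOK D mu mu)) as [O1 O2].
    rewrite E1, E2, O1, O2, M1, M2, A1, A2.
    rewrite (sq_abs (emb D mu)), (sq_abs (emb' D mu)), (sq_abs (emb D alpha)), (sq_abs (emb' D alpha)).
    pose proof (Rabs_pos (emb D mu)). pose proof (Rabs_pos (emb' D mu)).
    split; nra.
Qed.

Lemma BM_sym (D : Z) (HD : (1 < D)%Z) e e' : BM D e e' -> BM D e' e.
Proof.
  intros H mu H1 H2 H3 H4. destruct (emb_conj D HD mu) as [C1 C2].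
  apply (H (conjOK D mu)); rewrite ?C1, ?C2; auto.
Qed.

Lemma core (D : Z) (HD : (1 < D)%Z) (Hsf : squarefree D) (P Q : Z) :
  (1 <= Q)%Z -> BM D (Rabs (IZR P - IZR Q * omega D)) (Rabs (IZR P - IZR Q * omega' D)) ->
  Rabs (IZR P - IZR Q * omega D) <= 1 -> exists k, P = pP D k /\ Q = qQ D k.
Proof.
  intros HQ HB Hd.
  destruct (omega_facts D HD) as [_ [_ [_ [Hw Hw']]]].
  rewrite Rabs_minus_sym in Hd.
  destruct (key D HD Hsf P Q HQ Hd) as [H|[k [Hk [HP [HQk Hlt]]]]]; [exact H|].
  exfalso.
  pose proof (neq_of_lt D P Q k Hlt) as Hne.
  destruct k as [|k']; [lia|].
  pose proof (dl_nz D HD Hsf k') as Hz.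
  pose proof (P_pos D HD Hsf (S k')) as Pk. pose proof (Q_pos D HD Hsf k') as Qk.
  apply (HB (pP D (S k'), (- qQ D (S k'))%Z)); unfold emb, emb'; simpl fst; simpl snd;
    rewrite opp_IZR.
  - intro E. apply Hz. unfold dl. lra.
  - apply IZR_le in Pk. apply IZR_le in Qk. nra.
  - rewrite Rabs_minus_sym in Hlt. unfold dl in Hlt.
    replace (IZR (pP D (S k')) + - IZR (qQ D (S k')) * omega D) with
      (- (IZR (qQ D (S k')) * omega D - IZR (pP D (S k')))) by ring.
    rewrite Rabs_Ropp. exact Hlt.
  - apply IZR_le in Pk. apply IZR_le in Qk.
    assert (HP' : IZR (pP D (S k')) <= IZR P) by (apply IZR_le; lia).
    assert (HQ' : IZR (qQ D (S k')) <= IZR Q) by (apply IZR_le; lia).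
    assert (Hstr : IZR (pP D (S k')) + 1 <= IZR P \/ IZR (qQ D (S k')) + 1 <= IZR Q).
    { destruct Hne as [Hn|Hn]; [left|right]; rewrite <- plus_IZR; apply IZR_le; lia. }
    assert (0 < IZR P - IZR Q * omega' D - (IZR (pP D (S k')) + - IZR (qQ D (S k')) * omega' D)).
    { destruct Hstr; nra. }
    rewrite Rabs_right by nra.
    apply (Rlt_le_trans _ (IZR P - IZR Q * omega' D)); [lra| apply Rle_abs].
Qed.

Lemma alphaJ_form D k : alphaJ D k = (pP D k - qQ D k * omega_t D, qQ D k)%Z.
Proof.
  unfold alphaJ, addOK, mulOK, conjOK, omega_t. destruct (is1mod4 D); simpl; f_equal; ring.
Qed.

Lemma conj_alphaJ D k : conjOK D (alphaJ D k) = (pP D k, - qQ D k)%Z.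
Proof.
  rewrite alphaJ_form. unfold conjOK, omega_t. destruct (is1mod4 D); simpl; f_equal; ring.
Qed.

Theorem lemma11 (D : Z) (HD : (1 < D)%Z) (Hsf : squarefree D) (alpha : OK) :
  indecomposable D (mulOK D alpha alpha) ->
  exists n : nat,
    alpha = alphaJ D n \/ alpha = oppOK (alphaJ D n) \/
    alpha = conjOK D (alphaJ D n) \/ alpha = oppOK (conjOK D (alphaJ D n)).
Proof.
  intros H.
  pose proof (box D HD alpha H) as HB.
  destruct (omega_facts D HD) as [Ew' _].
  assert (H1 : ~ (1 < Rabs (emb D alpha) /\ 1 < Rabs (emb' D alpha))).
  { intros [A B].
    assert (E1 : emb D (1%Z, 0%Z) = 1) by (unfold emb; cbn [fst snd]; ring).
    assert (E2 : emb' D (1%Z, 0%Z) = 1) by (unfold emb'; cbn [fst snd]; ring).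
    apply (HB (1%Z, 0%Z)); rewrite ?E1, ?E2, ?Rabs_R1; lra. }
  destruct H as [[Tp _] _].
  destruct alpha as [a b].
  unfold emb, emb' in H1, HB; simpl fst in H1, HB; simpl snd in H1, HB.
  destruct (Z.eq_dec b 0) as [Hb|Hb].
  - subst b. rewrite !Rmult_0_l, !Rplus_0_r in H1.
    destruct (emb_mul D HD (a, 0%Z) (a, 0%Z)) as [M _].
    rewrite M in Tp. unfold emb in Tp; cbn [fst snd] in Tp. rewrite Rmult_0_l, Rplus_0_r in Tp.
    assert (Ha : (a = 1 \/ a = -1)%Z).
    { destruct (Z.eq_dec a 0) as [->|]; [lra|].
      destruct (Z_le_gt_dec 2 (Z.abs a)); [|lia].
      exfalso. apply H1. rewrite <- abs_IZR. split; apply IZR_lt; lia. }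
    exists 0%nat. rewrite alphaJ_form, pP_0, qQ_0.
    destruct Ha as [->| ->]; [left|right;left]; reflexivity.
  - set (t := omega_t D) in *.
    assert (Hs : Rabs (IZR a + IZR b * omega D) <= 1 \/ Rabs (IZR a + IZR b * omega' D) <= 1) by lra.
    destruct Hs as [Hs|Hs]; destruct (Z_le_gt_dec b 0) as [Hb0|Hb0].
    +
      destruct (core D HD Hsf a (-b) ltac:(lia)) as [k [E1 E2]].
      * replace (IZR a - IZR (- b) * omega D) with (IZR a + IZR b * omega D) by (rewrite opp_IZR; ring).
        replace (IZR a - IZR (- b) * omega' D) with (IZR a + IZR b * omega' D) by (rewrite opp_IZR; ring).
        exact HB.
      * replace (IZR a - IZR (- b) * omega D) with (IZR a + IZR b * omega D) by (rewrite opp_IZR; ring).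
        exact Hs.
      * exists k. right; right; left. rewrite conj_alphaJ, <- E1, <- E2. f_equal; ring.
    + destruct (core D HD Hsf (-a) b ltac:(lia)) as [k [E1 E2]].
      * replace (IZR (-a) - IZR b * omega D) with (- (IZR a + IZR b * omega D)) by (rewrite opp_IZR; ring).
        replace (IZR (-a) - IZR b * omega' D) with (- (IZR a + IZR b * omega' D)) by (rewrite opp_IZR; ring).
        rewrite !Rabs_Ropp. exact HB.
      * replace (IZR (-a) - IZR b * omega D) with (- (IZR a + IZR b * omega D)) by (rewrite opp_IZR; ring).
        rewrite Rabs_Ropp. exact Hs.
      * exists k. right; right; right. rewrite conj_alphaJ, <- E1, <- E2. unfold oppOK; simpl. f_equal; ring.
    + destruct (core D HD Hsf (-(a + b * t)) (-b) ltac:(lia)) as [k [E1 E2]].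
      * replace (IZR (-(a + b * t)) - IZR (- b) * omega D) with (- (IZR a + IZR b * omega' D))
          by (rewrite Ew', !opp_IZR, plus_IZR, mult_IZR; unfold t; ring).
        replace (IZR (-(a + b * t)) - IZR (- b) * omega' D) with (- (IZR a + IZR b * omega D))
          by (rewrite Ew', !opp_IZR, plus_IZR, mult_IZR; unfold t; ring).
        rewrite !Rabs_Ropp. apply BM_sym; [exact HD|exact HB].
      * replace (IZR (-(a + b * t)) - IZR (- b) * omega D) with (- (IZR a + IZR b * omega' D))
          by (rewrite Ew', !opp_IZR, plus_IZR, mult_IZR; unfold t; ring).
        rewrite Rabs_Ropp. exact Hs.
      * exists k. right; left. rewrite alphaJ_form, <- E1, <- E2. unfold oppOK; simpl. fold t. f_equal; ring.
    + destruct (core D HD Hsf (a + b * t) b ltac:(lia)) as [k [E1 E2]].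
      * replace (IZR (a + b * t) - IZR b * omega D) with (IZR a + IZR b * omega' D)
          by (rewrite Ew', plus_IZR, mult_IZR; unfold t; ring).
        replace (IZR (a + b * t) - IZR b * omega' D) with (IZR a + IZR b * omega D)
          by (rewrite Ew', plus_IZR, mult_IZR; unfold t; ring).
        apply BM_sym; [exact HD|exact HB].
      * replace (IZR (a + b * t) - IZR b * omega D) with (IZR a + IZR b * omega' D)
          by (rewrite Ew', plus_IZR, mult_IZR; unfold t; ring).
        exact Hs.
      * exists k. left. rewrite alphaJ_form, <- E1, <- E2. fold t. f_equal; ring.
Qed.
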